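(* Skeptic can weakly force the event \[ E_3:=\Bigl\{\xi:\ |s_n|>\sqrt n-1\ \text{for infinitely many } n\ \ \text{or}\ \ \bigl(\limsup_{n\to\infty}|s_n|=\infty\ \text{and}\ s_n\neq0\ \text{for all but finitely many } n\bigr)\Bigr\}. \]
   Context: Fair-coin game: in rounds $n=1,2,\dots$ Skeptic announces $M_n\in\mathbb{R}$ (depending only on $x_1,\dots,x_{n-1}$), then Reality announces $x_n\in\{-1,1\}$. A path is an infinite sequence $\xi=x_1x_2\cdots\in\{-1,1\}^{\mathbb{N}}$, and $\Omega$ is the set of paths. We write $s_n:=x_1+\cdots+x_n$, with $s_0=0$. The capital process of a strategy with zero initial capital is $\mathcal{K}^{\mathcal{P}}_n=\sum_{k=1}^nM_kx_k$. Skeptic weakly forces $E\subseteq\Omega$ if some strategy $\mathcal{P}$ has $\mathcal{K}^{\mathcal{P}}_n(\xi)\ge-1$ for all $\xi\in\Omega$ and $n\ge0$, and $\limsup_n\mathcal{K}^{\mathcal{P}}_n(\xi)=\infty$ for every $\xi\notin E$. *)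

(* Defs.v *)
From Stdlib Require Import Reals List.
Open Scope R_scope.

(* A path xi = x_1 x_2 ... is encoded as a function nat -> bool:
   xi k is the move x_(k+1), with true = +1 and false = -1. *)
Definition path := nat -> bool.

Definition move (b : bool) : R := if b then 1 else -1.

Fixpoint prefix (xi : path) (n : nat) : list bool :=
  match n with
  | O => nil
  | S m => prefix xi m ++ (xi m :: nil)
  end.

Fixpoint s (xi : path) (n : nat) : R :=
  match n with
  | O => 0
  | S m => s xi m + move (xi m)
  end.

(* A strategy: M_n is a function of the history x_1 ... x_(n-1). *)
Definition strategy := list bool -> R.

Fixpoint capital (P : strategy) (xi : path) (n : nat) : R :=
  match n with
  | O => 0
  | S m => capital P xi m + P (prefix xi m) * move (xi m)
  end.

Definition limsup_infty (u : nat -> R) : Prop :=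
  forall C : R, forall N : nat, exists n : nat, (n >= N)%nat /\ u n > C.

Definition weakly_forces (E : path -> Prop) : Prop :=
  exists P : strategy,
    (forall (xi : path) (n : nat), capital P xi n >= -1) /\
    (forall xi : path, ~ E xi -> limsup_infty (capital P xi)).

Definition E3 (xi : path) : Prop :=
  (forall N : nat, exists n : nat, (n >= N)%nat /\ Rabs (s xi n) > sqrt (INR n) - 1)
  \/
  (limsup_infty (fun n => Rabs (s xi n)) /\
   exists N : nat, forall n : nat, (n >= N)%nat -> s xi n <> 0).

(* Main.v *)
Require Import Defs.
From Stdlib Require Import Reals List Lra Lia Psatz Classical ClassicalDescription.
Open Scope R_scope.

Definition Rg (xi : path) (j : nat) : Prop := Rabs (s xi j) <= sqrt (INR j) - 1.
Definition active (xi : path) (m n : nat) : Prop :=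
  (m <= n)%nat /\ forall j, (m <= j <= n)%nat -> Rg xi j.
Definition bb (xi : path) (m n : nat) : R :=
  if excluded_middle_informative (active xi m n) then -2 * s xi n else 0.
Definition w (m : nat) : R := (1/2)^(S m) / (INR m + 1).
Definition bet (xi : path) (n : nat) : R := sum_f_R0 (fun m => w m * bb xi m n) n.
Definition hp (h : list bool) : path := fun k => nth k h true.
Definition Pstrat : strategy := fun h => bet (hp h) (length h).

Fixpoint G (xi : path) (m n : nat) : R :=
  match n with O => 0 | S k => G xi m k + bb xi m k * move (xi k) end.

Lemma move_sq b : move b * move b = 1.
Proof. destruct b; simpl; lra. Qed.

Lemma len_prefix xi n : length (prefix xi n) = n.
Proof. induction n; simpl; auto. rewrite length_app, IHn; simpl; lia. Qed.

Lemma nth_prefix xi n k : (k < n)%nat -> nth k (prefix xi n) true = xi k.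
Proof.
  induction n; intros H; [lia|]. simpl.
  destruct (Nat.eq_dec k n).
  - subst. rewrite app_nth2; rewrite len_prefix; [|lia]. rewrite Nat.sub_diag. reflexivity.
  - rewrite app_nth1; [|rewrite len_prefix; lia]. apply IHn; lia.
Qed.

Lemma s_agree xi xi' n : (forall k, (k < n)%nat -> xi k = xi' k) ->
  forall j, (j <= n)%nat -> s xi j = s xi' j.
Proof.
  intros H j; induction j; intros Hj; simpl; auto.
  rewrite IHj by lia. rewrite H by lia. reflexivity.
Qed.

Lemma bet_agree xi xi' n : (forall k, (k < n)%nat -> xi k = xi' k) ->
  bet xi n = bet xi' n.
Proof.
  intros H. unfold bet. apply sum_eq. intros m _. f_equal. unfold bb.
  assert (Hs := s_agree xi xi' n H).
  assert (Heq : active xi m n <-> active xi' m n).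
  { unfold active, Rg. split; intros [H1 H2]; split; auto; intros j Hj;
    specialize (H2 j Hj); [rewrite <- Hs | rewrite Hs]; auto; lia. }
  destruct (excluded_middle_informative (active xi m n));
  destruct (excluded_middle_informative (active xi' m n)); try tauto.
  rewrite Hs; auto.
Qed.

Lemma Pstrat_eq xi n : Pstrat (prefix xi n) = bet xi n.
Proof.
  unfold Pstrat. rewrite len_prefix. apply bet_agree.
  intros k Hk. unfold hp. apply nth_prefix; auto.
Qed.

Lemma G_inv xi m : forall n,
  ((n <= m)%nat -> G xi m n = 0) /\
  ((m <= n)%nat -> (forall j, (m <= j < n)%nat -> Rg xi j) ->
      G xi m n = INR n - s xi n * s xi n - (INR m - s xi m * s xi m)) /\
  G xi m n >= - INR m.
Proof.
  induction n as [|n [I1 [I2 I3]]].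
  - simpl. split; auto. split.
    + intros H _. assert (m = 0%nat) by lia. subst. simpl. ring.
    + pose proof (pos_INR m). lra.
  - simpl G. unfold bb.
    destruct (excluded_middle_informative (active xi m n)) as [[Ha1 Ha2]|Hna].
    + assert (HG : G xi m n = INR n - s xi n * s xi n - (INR m - s xi m * s xi m)).
      { apply I2; auto. intros j Hj; apply Ha2; lia. }
      assert (Heq : G xi m n + -2 * s xi n * move (xi n) =
               INR (S n) - s xi (S n) * s xi (S n) - (INR m - s xi m * s xi m)).
      { rewrite HG, S_INR. simpl s. pose proof (move_sq (xi n)). nra. }
      split; [intros; lia|]. split; [intros; exact Heq|].
      rewrite Heq.
      assert (Hr := Ha2 n (conj Ha1 (le_n n))). unfold Rg in Hr.
      assert (Hb : Rabs (s xi (S n)) <= sqrt (INR n)).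
      { simpl s. pose proof (Rabs_triang (s xi n) (move (xi n))).
        assert (Rabs (move (xi n)) = 1) by (destruct (xi n); simpl; unfold Rabs; destruct Rcase_abs; lra).
        lra. }
      assert (Hsq : s xi (S n) * s xi (S n) <= INR n).
      { rewrite <- (sqrt_sqrt (INR n)) by apply pos_INR.
        replace (s xi (S n) * s xi (S n)) with (Rabs (s xi (S n)) * Rabs (s xi (S n))).
        - apply Rmult_le_compat; auto; apply Rabs_pos.
        - rewrite <- Rabs_mult. apply Rabs_right. nra. }
      rewrite S_INR. pose proof (pos_INR m). nra.
    + rewrite Rmult_0_l, Rplus_0_r. split; [intros; apply I1; lia|]. split; [|auto].
      intros H1 H2. destruct (Nat.eq_dec m (S n)).
      * subst. rewrite I1 by lia. ring.
      * exfalso. apply Hna. split; [lia|]. intros j Hj. apply H2. lia.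
Qed.

Lemma sum_lin f g x n : sum_f_R0 (fun m => f m + g m * x) n = sum_f_R0 f n + sum_f_R0 g n * x.
Proof. induction n; simpl; [ring|]. rewrite IHn. ring. Qed.

Lemma capital_eq xi n : capital Pstrat xi n = sum_f_R0 (fun m => w m * G xi m n) n.
Proof.
  induction n.
  - simpl. ring.
  - simpl capital. rewrite IHn, Pstrat_eq. unfold bet.
    rewrite <- sum_lin. idtac.
    simpl sum_f_R0. change (G xi (S n) n + bb xi (S n) n * move (xi n)) with (G xi (S n) (S n)). rewrite (proj1 (G_inv xi (S n) (S n))) by lia.
    rewrite Rmult_0_r, Rplus_0_r. apply sum_eq. intros i _. simpl G. ring.
Qed.

Lemma geom n : sum_f_R0 (fun m => (1/2)^(S m)) n = 1 - (1/2)^(S n).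
Proof. induction n; simpl in *; [lra|]. rewrite IHn. simpl. lra. Qed.

Lemma sum_opp (f : nat -> R) n : sum_f_R0 (fun m => - f m) n = - sum_f_R0 f n.
Proof. induction n; simpl; [ring|]. rewrite IHn. ring. Qed.

Lemma geom_neg n : sum_f_R0 (fun m => - (1/2)^(S m)) n = - (1 - (1/2)^(S n)).
Proof. rewrite <- geom. apply sum_opp. Qed.

Lemma w_G xi m n : w m * G xi m n >= - (1/2)^(S m).
Proof.
  destruct (G_inv xi m n) as [_ [_ H3]]. unfold w.
  set (p := (1/2)^(S m)). set (q := INR m).
  assert (0 < p) by (apply pow_lt; lra).
  assert (0 <= q) by apply pos_INR.
  assert (Hw : / (q+1) * (q+1) = 1) by (field; lra).
  assert (0 < / (q+1)) by (apply Rinv_0_lt_compat; lra).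
  unfold Rdiv. assert (0 <= p * / (q+1) * (G xi m n + q + 1)).
  { apply Rmult_le_pos; [apply Rmult_le_pos|]; try lra. unfold q; lra. }
  assert (E : p * / (q+1) * (G xi m n + q + 1) = p * / (q+1) * G xi m n + p * (/ (q+1) * (q+1))) by ring.
  rewrite Hw in E. lra.
Qed.

Lemma sum_extra a f n N D : (N <= n)%nat -> (forall m, (m <= n)%nat -> a m <= f m) ->
  a N + D <= f N -> sum_f_R0 a n + D <= sum_f_R0 f n.
Proof.
  intros HN Ha HD. induction n.
  - assert (N = 0%nat) by lia. subst. simpl. lra.
  - simpl. destruct (Nat.eq_dec N (S n)).
    + subst. assert (sum_f_R0 a n <= sum_f_R0 f n) by (apply sum_Rle; intros; apply Ha; lia). lra.
    + assert (sum_f_R0 a n + D <= sum_f_R0 f n) by (apply IHn; [lia| intros; apply Ha; lia]).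
      specialize (Ha (S n) (le_n _)). lra.
Qed.

Theorem corollary1 : weakly_forces E3.
Proof.
  exists Pstrat. split.
  - intros xi n. rewrite capital_eq.
    assert (sum_f_R0 (fun m => - (1/2)^(S m)) n <= sum_f_R0 (fun m => w m * G xi m n) n).
    { apply sum_Rle. intros m _. pose proof (w_G xi m n). lra. }
    assert (Hs : sum_f_R0 (fun m => - (1/2)^(S m)) n = - (1 - (1/2)^(S n))).
    { apply geom_neg. }
    pose proof (pow_lt (1/2) (S n)). lra.
  - intros xi HE C N0.
    assert (HN : exists N, forall n, (n >= N)%nat -> Rg xi n).
    { apply NNPP. intro Hc. apply HE. left. intro N.
      apply NNPP. intro Hc2. apply Hc. exists N. intros n Hn. unfold Rg.
      apply Rnot_lt_le. intro Hlt. apply Hc2. exists n. split; auto. }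
    destruct HN as [N HN].
    set (c := INR N - s xi N * s xi N).
    assert (Hw : 0 < w N).
    { unfold w. apply Rdiv_lt_0_compat; [apply pow_lt; lra| pose proof (pos_INR N); lra]. }
    set (K := ((C + 1) / w N + 1 + c) / 2).
    destruct (INR_unbounded (Rabs K * Rabs K)) as [n0 Hn0].
    set (n := (n0 + N0 + N)%nat).
    exists n. split; [unfold n; lia|].
    assert (Hsq : sqrt (INR n) > Rabs K).
    { rewrite <- (sqrt_square (Rabs K)) by apply Rabs_pos.
      apply sqrt_lt_1; [apply Rmult_le_pos; apply Rabs_pos| apply pos_INR|].
      assert (INR n0 <= INR n) by (apply le_INR; unfold n; lia). lra. }
    assert (HG : G xi N n = INR n - s xi n * s xi n - c).
    { apply (proj1 (proj2 (G_inv xi N n))); [unfold n; lia|].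
      intros j Hj. apply HN. lia. }
    assert (Hr := HN n ltac:(unfold n; lia)). unfold Rg in Hr.
    assert (Hss : s xi n * s xi n <= (sqrt (INR n) - 1) * (sqrt (INR n) - 1)).
    { replace (s xi n * s xi n) with (Rabs (s xi n) * Rabs (s xi n)).
      - apply Rmult_le_compat; auto; apply Rabs_pos.
      - rewrite <- Rabs_mult. apply Rabs_right. nra. }
    assert (Hsn : sqrt (INR n) * sqrt (INR n) = INR n) by (apply sqrt_sqrt, pos_INR).
    assert (HGb : G xi N n >= 2 * sqrt (INR n) - 1 - c) by nra.
    rewrite capital_eq.
    assert (Hx : sum_f_R0 (fun m => - (1/2)^(S m)) n + w N * G xi N n <=
                 sum_f_R0 (fun m => w m * G xi m n) n).
    { apply (sum_extra _ _ n N); [unfold n; lia| |].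
      - intros m _. pose proof (w_G xi m N). pose proof (w_G xi m n). lra.
      - pose proof (pow_lt (1/2) (S N)). lra. }
    assert (Hs : sum_f_R0 (fun m => - (1/2)^(S m)) n >= -1).
    { assert (sum_f_R0 (fun m => - (1/2)^(S m)) n = - (1 - (1/2)^(S n))).
      { apply geom_neg. }
      pose proof (pow_lt (1/2) (S n)). lra. }
    assert (HK : K <= Rabs K) by apply RRle_abs.
    assert (w N * G xi N n >= w N * (2 * sqrt (INR n) - 1 - c)) by (apply Rmult_ge_compat_l; lra).
    assert (w N * (2 * sqrt (INR n) - 1 - c) > C + 1).
    { assert (Hq : 2 * sqrt (INR n) - 1 - c > (C+1) / w N) by (unfold K in *; lra).
      apply Rmult_gt_compat_l with (r := w N) in Hq; [|lra].
      replace (w N * ((C + 1) / w N)) with (C+1) in Hq by (field; lra). lra. }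
    lra.
Qed.
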